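(* Consider the discrete-time linear system $x_{t+1}=Ax_t+Bu_t+v_t$ with $x_t\in\mathbb{R}^n$, $u_t\in\mathbb{R}^p$, where the disturbances $v_t\in\mathbb{R}^n$ are i.i.d. samples from a distribution $\mathcal{D}$ (of arbitrary form, with bounded moments). Let $Q,R$ be positive definite matrices, $\gamma\in(0,1)$, and let $K\in\mathbb{R}^{p\times n}$ be a feedback gain such that $A_K:=A+BK$ is stable. Set $Q_K:=Q+K^{\rm T}RK$ and let $P$ be the solution of the Lyapunov equation $P=Q+K^{\rm T}RK+\gamma A_K^{\rm T}PA_K$. For $x\in\mathbb{R}^n$ define the random variable $$G^{K}(x)=x^{\rm T}Px+2\sum_{k=0}^{\infty}\gamma^{k+1}w_k^{\rm T}PA_K^{k+1}x+\sum_{k=0}^{\infty}\gamma^{k+1}w_k^{\rm T}Pw_k+2\sum_{k=1}^{\infty}\gamma^{k+1}w_k^{\rm T}P\sum_{\tau=0}^{k-1}A_K^{k-\tau}w_\tau,$$ where $w_k\sim\mathcal{D}$, $k\in\mathbb{N}$, are mutually independent. Then $G^K(x)$ is a fixed-point solution of the random variable Bellman equation $$G^{K}(x)\overset{D}{=}x^{\rm T}Q_Kx+\gamma G^{K}(x'),\qquad x'=A_Kx+v_0,$$ where $v_0\sim\mathcal{D}$ is independent of the $w_k$'s and $\overset{D}{=}$ denotes equality in distribution.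
   Context: The random return of the static linear policy $u_t=Kx_t$ from $x_0=x$ is $\sum_{t=0}^\infty\gamma^t x_t^{\rm T}(Q+K^{\rm T}RK)x_t$; the theorem gives an explicit random variable satisfying its distributional Bellman equation. In $G^K(x')$ the state $x'$ is random and independent of the fresh copies $w_k$ used in the definition of $G^K$. *)

(* Defs.v *)
From HB Require Import structures.
From mathcomp Require Import all_boot all_order all_algebra.
From mathcomp Require Import all_classical all_reals all_analysis.
Set Implicit Arguments. Unset Strict Implicit. Unset Printing Implicit Defensive.
Import Order.TTheory GRing.Theory Num.Theory.
Import numFieldNormedType.Exports.
Local Open Scope classical_set_scope.
Local Open Scope ring_scope.

(* Column vector in R^n associated to an n-tuple (R^n is represented,
   for measurability purposes, by n.-tuple R with its product sigma-algebra). *)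
Definition col_of (R : realType) (n : nat) (t : n.-tuple R) : 'cV[R]_n :=
  \col_i tnth t i.

Definition bil (R : realType) (n : nat) (u : 'cV[R]_n) (M : 'M[R]_n)
  (v : 'cV[R]_n) : R := (u^T *m M *m v) ord0 ord0.

Definition posdef (R : realType) (n : nat) (M : 'M[R]_n) : Prop :=
  M^T = M /\ forall x : 'cV[R]_n, x != 0 -> 0 < bil x M x.

Definition stable (R : realType) (n : nat) (M : 'M[R]_n) : Prop :=
  forall (x : 'cV[R]_n) (i : 'I_n),
    (fun k : nat => (M ^+ k *m x) i ord0) @ \oo --> (0 : R).

Definition rsum (R : realType) (F : nat -> R) : R :=
  limn (fun N : nat => \sum_(0 <= k < N) F k).

Definition Gfun (R : realType) (n : nat) (gamma : R) (P AK : 'M[R]_n)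
  (w : nat -> 'cV[R]_n) (x : 'cV[R]_n) : R :=
  bil x P x
  + 2 * rsum (fun k => gamma ^+ k.+1 * bil (w k) P (AK ^+ k.+1 *m x))
  + rsum (fun k => gamma ^+ k.+1 * bil (w k) P (w k))
  + 2 * rsum (fun k => if k == 0%N then 0 else
        gamma ^+ k.+1 * bil (w k) P (\sum_(0 <= tau < k) AK ^+ (k - tau) *m w tau)).

Definition mutually_independent d d' (T : measurableType d)
  (T' : measurableType d') (R : realType) (Pr : probability T R)
  (I : eqType) (Y : I -> T -> T') : Prop :=
  forall (s : seq I) (E : I -> set T'), uniq s ->
    (forall i, measurable (E i)) ->
    Pr (\bigcap_(i in [set` s]) (Y i @^-1` E i)) =
      (\prod_(i <- s) Pr (Y i @^-1` E i))%E.

Definition has_law d d' (T : measurableType d) (T' : measurableType d')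
  (R : realType) (Pr : probability T R) (D : probability T' R)
  (Y : T -> T') : Prop :=
  forall E, measurable E -> Pr (Y @^-1` E) = D E.

Definition eq_in_law d (T : measurableType d) (R : realType)
  (Pr : probability T R) (X Y : T -> R) : Prop :=
  forall E : set R, measurable E -> Pr (X @^-1` E) = Pr (Y @^-1` E).

(* Main.v *)
Require Import Defs.
From HB Require Import structures.
From mathcomp Require Import all_boot all_order all_algebra.
From mathcomp Require Import all_classical all_reals all_analysis.
From mathcomp Require Import measurable_realfun.
From mathcomp Require Import ring lra.
Set Implicit Arguments. Unset Strict Implicit. Unset Printing Implicit Defensive.
Import Order.TTheory GRing.Theory Num.Theory.
Import numFieldNormedType.Exports.
Local Open Scope classical_set_scope.
Local Open Scope ring_scope.

Lemma bounded_funP (R : realType) (a : nat -> R) :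
  bounded_fun a -> exists M, forall k, `|a k| <= M.
Proof.
move=> [r [_ H]]; exists (r + 1); move=> k; apply: (H (r+1)) => //.
by rewrite ltrDl.
Qed.

Section Series.
Variable R : realType.
Implicit Types F G : nat -> R.

Lemma rsum_shift F : cvgn (series (fun k => F k.+1)) ->
  cvgn (series F) /\ rsum F = F 0%N + rsum (fun k => F k.+1).
Proof.
move=> cF.
have E : (fun N => series F N.+1) = (fun N => F 0%N + series (fun k => F k.+1) N).
  by apply: funext => N; rewrite /series /= big_nat_recl.
have H : series F @ \oo --> F 0%N + limn (series (fun k => F k.+1)).
  rewrite -cvg_shiftS /= E; apply: cvgD => //; exact: cvg_cst.
split; first by apply/cvg_ex; eexists; exact: H.
by rewrite /rsum (cvg_lim _ H).
Qed.
End Series.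

Section Bil.
Variables (R : realType) (n : nat).
Implicit Types (u v z : 'cV[R]_n) (M : 'M[R]_n).

Lemma bilDr u M v z : bil u M (v + z) = bil u M v + bil u M z.
Proof. by rewrite /bil mulmxDr mxE. Qed.
Lemma bilDl u v M z : bil (u + v) M z = bil u M z + bil v M z.
Proof. by rewrite /bil linearD /= !mulmxDl mxE. Qed.
Lemma bil0r u M : bil u M 0 = 0.
Proof. by rewrite /bil mulmx0 mxE. Qed.
Lemma bil_sumr u M (I : Type) (r : seq I) (Pi : pred I) (f : I -> 'cV[R]_n) :
  bil u M (\sum_(i <- r | Pi i) f i) = \sum_(i <- r | Pi i) bil u M (f i).
Proof. by rewrite /bil mulmx_sumr summxE. Qed.
Lemma bil_sym u M v : M^T = M -> bil u M v = bil v M u.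
Proof.
move=> HM; rewrite /bil -[in LHS](trmxK (u^T *m M *m v)) mxE.
by rewrite !trmx_mul trmxK HM mulmxA.
Qed.
Lemma bil_mul u M v (B : 'M[R]_n) : bil (B *m u) M (B *m v) = bil u (B^T *m M *m B) v.
Proof. by rewrite /bil trmx_mul !mulmxA. Qed.
Lemma bil_mulr u M v (B : 'M[R]_n) : bil u M (B *m v) = bil u (M *m B) v.
Proof. by rewrite /bil !mulmxA. Qed.
Lemma bilMatD u M1 M2 v : bil u (M1 + M2) v = bil u M1 v + bil u M2 v.
Proof. by rewrite /bil mulmxDr mulmxDl mxE. Qed.
Lemma bilMatZ u (c : R) M v : bil u (c *: M) v = c * bil u M v.
Proof. by rewrite /bil -scalemxAr -scalemxAl mxE. Qed.
End Bil.

Section Ident.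
Variables (R : realType) (n : nat) (g : R) (P A QK : 'M[R]_n).
Implicit Types (u : nat -> 'cV[R]_n) (z : 'cV[R]_n).

Definition T1 z u k := g ^+ k.+1 * bil (u k) P (A ^+ k.+1 *m z).
Definition T2 u k := g ^+ k.+1 * bil (u k) P (u k).
Definition T3 u k := if k == 0%N then 0 else
        g ^+ k.+1 * bil (u k) P (\sum_(0 <= tau < k) A ^+ (k - tau) *m u tau).
Definition Sh u := fun k => u k.+1.

Lemma GfunE u z : Gfun g P A u z =
  bil z P z + 2 * rsum (T1 z u) + rsum (T2 u) + 2 * rsum (T3 u).
Proof. by []. Qed.

Lemma T1S z u k : T1 z u k.+1 = g * T1 (A *m z) (Sh u) k.
Proof. by rewrite /T1 /Sh exprS -mulrA mulmxA mulmxE -exprSr. Qed.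

Lemma T2S u k : T2 u k.+1 = g * T2 (Sh u) k.
Proof. by rewrite /T2 /Sh exprS -mulrA. Qed.

Lemma T3S u k : T3 u k.+1 = g * T1 (u 0%N) (Sh u) k + g * T3 (Sh u) k.
Proof.
rewrite /T3 /T1 /Sh /= big_nat_recl // subn0 bilDr mulrDr exprS -!mulrA.
congr (_ + _); case: (k =P 0%N) => [->|_].
  by rewrite big_geq // bil0r !mulr0.
congr (_ * (_ * _)); congr bil; apply: eq_bigr => i _; by rewrite subSS.
Qed.

Lemma T1D z1 z2 u k : T1 (z1 + z2) u k = T1 z1 u k + T1 z2 u k.
Proof. by rewrite /T1 mulmxDr bilDr mulrDr. Qed.

Lemma G_shift u x :
  P^T = P -> P = QK + g *: (A^T *m P *m A) ->
  cvgn (series (T1 (A *m x) (Sh u))) -> cvgn (series (T1 (u 0%N) (Sh u))) ->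
  cvgn (series (T2 (Sh u))) -> cvgn (series (T3 (Sh u))) ->
  Gfun g P A u x = bil x QK x + g * Gfun g P A (Sh u) (A *m x + u 0%N).
Proof.
move=> Psym Peq c1 c2 c3 c4.
have [_ e1] : cvgn (series (T1 x u)) /\ rsum (T1 x u) = T1 x u 0%N + rsum (fun k => T1 x u k.+1).
  apply: rsum_shift; rewrite (_ : (fun k => _) = g *: T1 (A *m x) (Sh u)).
    exact: is_cvg_seriesZ.
  by apply: funext => k; rewrite T1S.
have [_ e2] : cvgn (series (T2 u)) /\ rsum (T2 u) = T2 u 0%N + rsum (fun k => T2 u k.+1).
  apply: rsum_shift; rewrite (_ : (fun k => _) = g *: T2 (Sh u)).
    exact: is_cvg_seriesZ.
  by apply: funext => k; rewrite T2S.
have [_ e3] : cvgn (series (T3 u)) /\ rsum (T3 u) = T3 u 0%N + rsum (fun k => T3 u k.+1).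
  apply: rsum_shift; rewrite (_ : (fun k => _) = g *: T1 (u 0%N) (Sh u) + g *: T3 (Sh u)).
    by apply: is_cvg_seriesD; exact: is_cvg_seriesZ.
  by apply: funext => k; rewrite T3S.
have f1 : rsum (fun k => T1 x u k.+1) = g * rsum (T1 (A *m x) (Sh u)).
  rewrite (_ : (fun k => _) = g *: T1 (A *m x) (Sh u)); last by apply: funext => k; rewrite T1S.
  by rewrite /rsum lim_seriesZ.
have f2 : rsum (fun k => T2 u k.+1) = g * rsum (T2 (Sh u)).
  rewrite (_ : (fun k => _) = g *: T2 (Sh u)); last by apply: funext => k; rewrite T2S.
  by rewrite /rsum lim_seriesZ.
have f3 : rsum (fun k => T3 u k.+1) = g * rsum (T1 (u 0%N) (Sh u)) + g * rsum (T3 (Sh u)).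
  rewrite (_ : (fun k => _) = g *: T1 (u 0%N) (Sh u) + g *: T3 (Sh u)); last first.
    by apply: funext => k; rewrite T3S.
  rewrite /rsum lim_seriesD; [by rewrite !lim_seriesZ | exact: is_cvg_seriesZ | exact: is_cvg_seriesZ].
have f4 : rsum (T1 (A *m x + u 0%N) (Sh u)) = rsum (T1 (A *m x) (Sh u)) + rsum (T1 (u 0%N) (Sh u)).
  rewrite (_ : T1 _ _ = T1 (A *m x) (Sh u) + T1 (u 0%N) (Sh u)); last first.
    by apply: funext => k; rewrite T1D.
  by rewrite /rsum lim_seriesD.
rewrite !GfunE e1 e2 e3 f1 f2 f3 f4.
have hx : bil x P x = bil x QK x + g * bil (A *m x) P (A *m x).
  by rewrite bil_mul {1}Peq bilMatD bilMatZ.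
have hy : bil (A *m x + u 0%N) P (A *m x + u 0%N) =
   bil (A *m x) P (A *m x) + 2 * bil (u 0%N) P (A *m x) + bil (u 0%N) P (u 0%N).
  rewrite !bilDl !bilDr (@bil_sym _ _ (A *m x) P (u 0%N) Psym); ring.
rewrite hy hx /T1 /T2 /T3 /= !expr1.
ring.
Qed.
End Ident.

Section Bound.
Variables (R : realType) (n : nat).
Definition q (v : 'cV[R]_n) : R := \sum_i (v i 0) ^+ 2.

Lemma q_ge0 v : 0 <= q v.
Proof. by apply: sumr_ge0 => i _; exact: sqr_ge0. Qed.

Lemma aux3 (a b c m : R) : `|b| <= m -> `|a * b * c| <= m * (a ^+ 2 + c ^+ 2).
Proof.
move=> hb; rewrite !normrM.
have ha := normr_ge0 a; have hc := normr_ge0 c; have hb0 := normr_ge0 b.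
rewrite -(@real_normK _ a) ?num_real // -(@real_normK _ c) ?num_real //.
set A := `|a| in ha *; set C := `|c| in hc *; set B := `|b| in hb hb0 *.
have h1 : A * C <= A ^+ 2 + C ^+ 2 by nra.
have h2 : 0 <= (m - B) * (A * C) by apply: mulr_ge0; [lra | exact: mulr_ge0].
have h3 : 0 <= m * (A ^+ 2 + C ^+ 2 - A * C) by apply: mulr_ge0; lra.
nra.
Qed.

Lemma bil_expand (u : 'cV[R]_n) (M : 'M[R]_n) v :
  bil u M v = \sum_j \sum_i u i 0 * M i j * v j 0.
Proof.
rewrite /bil mxE; apply: eq_bigr => j _; rewrite mxE big_distrl /=.
by apply: eq_bigr => i _; rewrite !mxE.
Qed.

Lemma bil_bound (u : 'cV[R]_n) (M : 'M[R]_n) v (m : R) : (forall i j, `|M i j| <= m) ->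
  `|bil u M v| <= m * n%:R * (q u + q v).
Proof.
move=> hM; rewrite bil_expand.
apply: (le_trans (ler_norm_sum _ _ _)).
apply: (@le_trans _ _ (\sum_(j < n) \sum_(i < n) m * (u i 0 ^+ 2 + v j 0 ^+ 2))).
  apply: ler_sum => j _; apply: (le_trans (ler_norm_sum _ _ _)).
  by apply: ler_sum => i _; apply: aux3.
rewrite (_ : \sum_(j < n) _ = \sum_(j < n) (m * q u + m *+ n * v j 0 ^+ 2)).
  rewrite big_split /= sumr_const card_ord -mulr_sumr -/(q v).
  rewrite le_eqVlt; apply/orP; left; apply/eqP. rewrite -mulr_natr; ring.
apply: eq_bigr => j _; rewrite -mulr_sumr big_split /= sumr_const card_ord mulrDr.
by rewrite mulrnAr mulrnAl.
Qed.
End Bound.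

Section Stab.
Variables (R : realType) (n : nat).

Lemma stable_bound (A : 'M[R]_n) : stable A ->
  exists c, 0 <= c /\ forall k i j, `|(A ^+ k) i j| <= c.
Proof.
move=> hA.
have H : forall p : 'I_n * 'I_n, exists c, forall k, `|(A ^+ k) p.1 p.2| <= c.
  move=> [i j]; have := hA (delta_mx j 0) i => /cvgP /cvg_seq_bounded /bounded_funP [c hc].
  by exists c => k; have := hc k; rewrite /= -colE mxE.
have [f hf] := choice H.
have f0 : forall p, 0 <= f p by move=> p; exact: le_trans (normr_ge0 _) (hf p 0%N).
exists (\sum_p f p); split; first by apply: sumr_ge0.
move=> k i j; apply: (le_trans (hf (i, j) k)).
by rewrite (bigD1 (i, j)) //= lerDl; apply: sumr_ge0.
Qed.

Lemma stable_boundP (A P : 'M[R]_n) : stable A ->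
  exists m, 0 <= m /\ forall k i j, `|(P *m A ^+ k) i j| <= m.
Proof.
move=> /stable_bound [c [c0 hc]].
exists ((\sum_i \sum_l `|P i l|) * c); split.
  by apply: mulr_ge0 => //; apply: sumr_ge0 => i _; apply: sumr_ge0.
move=> k i j; rewrite mxE.
apply: (le_trans (ler_norm_sum _ _ _)).
apply: (@le_trans _ _ ((\sum_l `|P i l|) * c)).
  rewrite mulr_suml; apply: ler_sum => l _; rewrite normrM.
  by apply: ler_wpM2l => //.
apply: ler_wpM2r => //.
rewrite [X in _ <= X](bigD1 i) //= lerDl; apply: sumr_ge0 => i' _; apply: sumr_ge0 => *; exact: normr_ge0.
Qed.
End Stab.

Lemma zero_of_geom (R : realType) (d C g : R) : 0 < g < 1 ->
  (forall k, `|d| <= g ^+ k * C) -> d = 0.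
Proof.
move=> /andP [g0 g1] H.
have h : (fun k => g ^+ k * C) @ \oo --> 0 * C.
  apply: cvgMl; apply: cvg_expr; rewrite gtr0_norm //.
have : `|d| <= limn (fun k => g ^+ k * C).
  apply: limr_ge; first by apply/cvg_ex; eexists; exact: h.
  by apply: nearW => k; exact: H.
rewrite (cvg_lim _ h) // mul0r => hd.
by apply/normr0_eq0/le_anti; rewrite hd normr_ge0.
Qed.

Section PSym.
Variables (R : realType) (n : nat).

Lemma bil_delta (M : 'M[R]_n) i j : bil (delta_mx i 0) M (delta_mx j 0) = M i j.
Proof. by rewrite /bil trmx_delta -rowE -colE !mxE. Qed.

Lemma q_bound (v : 'cV[R]_n) c : (forall l, `|v l 0| <= c) -> q v <= n%:R * c ^+ 2.
Proof.
move=> h; apply: (@le_trans _ _ (\sum_(l < n) c ^+ 2)).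
  apply: ler_sum => l _; have := h l; have := normr_ge0 (v l 0).
  rewrite -(@real_normK _ (v l 0)) ?num_real //; set x := `|v l 0|; nra.
by rewrite sumr_const card_ord mulr_natl.
Qed.

Lemma P_sym (A P QK : 'M[R]_n) (g : R) : stable A -> 0 < g < 1 -> QK^T = QK ->
  P = QK + g *: (A^T *m P *m A) -> P^T = P.
Proof.
move=> hA hg hQ Peq.
have hPT : P^T = QK + g *: (A^T *m P^T *m A).
  by rewrite {1}Peq linearD linearZ /= hQ !trmx_mul trmxK mulmxA.
set D := P^T - P.
have hD : D = g *: (A^T *m D *m A).
  rewrite /D {1}hPT {2}Peq mulmxBr mulmxBl scalerBr.
  by rewrite opprD addrACA subrr add0r.
have hk : forall k, D = g ^+ k *: ((A ^+ k)^T *m D *m A ^+ k).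
  elim => [|k IH]; first by rewrite expr0 scale1r trmx1 mul1mx mulmx1.
  rewrite {1}IH {1}hD -scalemxAr -scalemxAl scalerA -exprSr.
  have -> : A ^+ k.+1 = A *m A ^+ k by rewrite exprS. by rewrite trmx_mul !mulmxA.
have [c [c0 hc]] := stable_bound hA.
pose mD := \sum_l \sum_m `|D l m|.
have hmD : forall l m, `|D l m| <= mD.
  move=> l m; rewrite /mD (bigD1 l) //= (bigD1 m) //= -addrA lerDl.
  apply: addr_ge0; first by apply: sumr_ge0 => *; exact: normr_ge0.
  by apply: sumr_ge0 => *; apply: sumr_ge0 => *; exact: normr_ge0.
have D0 : D = 0.
  apply/matrixP => i j; rewrite [RHS]mxE.
  apply: (@zero_of_geom R (D i j) (mD * n%:R * (n%:R * c ^+ 2 + n%:R * c ^+ 2)) g hg) => k.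
  rewrite {1}(hk k) mxE -bil_delta -bil_mul normrM.
  case/andP: hg => g0 _.
  rewrite ger0_norm; last by rewrite exprn_ge0 // ltW.
  apply: ler_wpM2l; first by rewrite exprn_ge0 // ltW.
  apply: (le_trans (bil_bound _ _ hmD)).
  apply: ler_wpM2l.
    by apply: mulr_ge0; [apply: le_trans (hmD i j); exact: normr_ge0 | exact: ler0n].
  by apply: lerD; apply: q_bound => l; rewrite -colE mxE; exact: hc.
by apply/eqP; rewrite -subr_eq0 -/D D0.
Qed.
End PSym.

Lemma cmp_cvg (R : realType) (a b : nat -> R) :
  (forall k, `|a k| <= b k) -> cvgn (series b) -> cvgn (series a).
Proof.
move=> h cb; apply: normed_cvg.
apply: (series_le_cvg _ _ h cb) => k; first exact: normr_ge0.
exact: le_trans (normr_ge0 _) (h k).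
Qed.

Section Conv.
Variables (R : realType) (n : nat) (g rho m : R) (P A : 'M[R]_n).
Hypotheses (g0 : 0 < g) (grho : g < rho) (rho1 : rho < 1) (m0 : 0 <= m)
  (hm : forall k i j, `|(P *m A ^+ k) i j| <= m).

Definition good (v : nat -> 'cV[R]_n) := cvgn (series (fun k => rho ^+ k * q (v k))).

Let c0 := m * n%:R.
Let c00 : 0 <= c0. Proof. by apply: mulr_ge0 => //; exact: ler0n. Qed.
Let rho0 : 0 < rho. Proof. exact: lt_trans grho. Qed.

Let gk k : g ^+ k.+1 <= g ^+ k.
Proof.
rewrite exprS; apply: ler_piMl; first by rewrite exprn_ge0 // ltW.
exact: ltW (lt_trans grho rho1).
Qed.
Let grk k : g ^+ k <= rho ^+ k.
Proof. by apply: lerXn2r; rewrite ?nnegrE ?ltW // ltW. Qed.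
Let gk0 k : 0 <= g ^+ k. Proof. by rewrite exprn_ge0 // ltW. Qed.

Lemma cvg_T1 z v : good v -> cvgn (series (T1 g P A z v)).
Proof.
move=> gv.
apply: (@cmp_cvg _ _ (c0 *: (fun k => rho ^+ k * q (v k)) + geometric (c0 * q z) g)).
  move=> k; rewrite /T1 bil_mulr normrM ger0_norm //.
  apply: (le_trans (ler_wpM2l (gk0 _) (bil_bound _ _ (hm k.+1)))).
  rewrite -/c0 /= mulrDr mulrDr; apply: lerD.
    rewrite mulrCA; apply: ler_wpM2l => //; apply: ler_wpM2r; first exact: q_ge0.
    exact: le_trans (gk k) (grk k).
  rewrite mulrC; apply: ler_wpM2l; first by apply: mulr_ge0 => //; exact: q_ge0.
  exact: gk.
apply: is_cvg_seriesD; first exact: is_cvg_seriesZ.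
by apply: is_cvg_geometric_series; rewrite gtr0_norm // (lt_trans grho).
Qed.

Lemma cvg_T2 v : good v -> cvgn (series (T2 g P v)).
Proof.
move=> gv.
apply: (@cmp_cvg _ _ ((2 * c0) *: (fun k => rho ^+ k * q (v k)))); last first.
  exact: is_cvg_seriesZ.
move=> k; rewrite /T2 normrM ger0_norm //.
have hm0 : forall i j, `|P i j| <= m by move=> i j; have := hm 0%N i j; rewrite expr0 mulmx1.
apply: (le_trans (ler_wpM2l (gk0 _) (bil_bound _ _ hm0))).
rewrite -/c0 /=.
have := q_ge0 (v k); have := le_trans (gk k) (grk k); have := gk0 k.+1.
move=> h1 h2 h3.
set Q := q (v k).
have h4 : g ^+ k.+1 * Q <= rho ^+ k * Q by apply: ler_wpM2r.
have -> : ((2 * c0) *: (fun k => rho ^+ k * q (v k))) k = 2 * c0 * (rho ^+ k * Q) by [].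
have h5 : 0 <= c0 * (rho ^+ k * Q - g ^+ k.+1 * Q) by apply: mulr_ge0 => //; lra.
nra.
Qed.

Lemma cvg_T3 v : good v -> cvgn (series (T3 g P A v)).
Proof.
move=> gv.
set r := g / rho.
have r0 : 0 < r by rewrite divr_gt0.
have r1 : r < 1 by rewrite ltr_pdivrMr // mul1r.
set K := 1 / (1 - r).
set M := limn (series (fun k => rho ^+ k * q (v k))).
have ge : forall k, g ^+ k = r ^+ k * rho ^+ k.
  by move=> k; rewrite -exprMn /r divfK // gt_eqF.
have hK : forall k, k%:R * r ^+ k <= K.
  move=> k; apply: (@le_trans _ _ (series (geometric 1 r) k)); last first.
    by apply: geometric_le_lim => //; rewrite gtr0_norm.
  rewrite /series /= mulr_natl -[X in _ *+ X]subn0 -sumr_const_nat.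
  apply: ler_sum_nat => j /andP [_ jk].
  by rewrite mul1r; apply: ler_wiXn2l; rewrite ?ltW //; exact: ltnW.
have hM : forall k, rho ^+ k * \sum_(0 <= t < k) q (v t) <= M.
  move=> k; apply: (@le_trans _ _ (series (fun k => rho ^+ k * q (v k)) k)).
    rewrite mulr_sumr; apply: ler_sum_nat => t /andP [_ tk].
    apply: ler_wpM2r; first exact: q_ge0.
    by apply: ler_wiXn2l; rewrite ?ltW //; exact: ltnW.
  apply: nondecreasing_cvgn_le => //; apply: nondecreasing_series => j _ _.
  by apply: mulr_ge0; [rewrite exprn_ge0 // ltW | exact: q_ge0].
have M0 : 0 <= M.
  apply: le_trans (hM 0%N); rewrite big_geq // mulr0 //.
apply: (@cmp_cvg _ _ ((c0 * K) *: (fun k => rho ^+ k * q (v k)) + geometric (c0 * M) r)); last first.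
  apply: is_cvg_seriesD; first exact: is_cvg_seriesZ.
  by apply: is_cvg_geometric_series; rewrite gtr0_norm.
move=> k.
have -> : ((c0 * K) *: (fun k => rho ^+ k * q (v k)) + geometric (c0 * M) r) k =
  c0 * K * (rho ^+ k * q (v k)) + c0 * M * r ^+ k by [].
have K0 : 0 <= K by apply: le_trans (hK 0%N); rewrite mul0r.
rewrite /T3; case: (k =P 0%N) => [_|/eqP kn0].
  rewrite normr0; apply: addr_ge0; apply: mulr_ge0.
  - exact: mulr_ge0.
  - by apply: mulr_ge0; [exact: exprn_ge0 (ltW rho0) | exact: q_ge0].
  - exact: mulr_ge0.
  - exact: exprn_ge0 (ltW r0).
rewrite bil_sumr normrM ger0_norm //.
have h1 : `|\sum_(0 <= t < k) bil (v k) P (A ^+ (k - t) *m v t)| <=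
   c0 * (k%:R * q (v k) + \sum_(0 <= t < k) q (v t)).
  apply: (le_trans (ler_norm_sum _ _ _)).
  rewrite mulr_natl -[X in _ *+ X]subn0 -sumr_const_nat -big_split /= mulr_sumr.
  apply: ler_sum => t _.
  by rewrite bil_mulr; apply: bil_bound.
apply: (le_trans (ler_wpM2l (gk0 _) h1)).
set Q := q (v k); set S := \sum_(0 <= t < k) q (v t).
have Q0 : 0 <= Q by exact: q_ge0.
have S0 : 0 <= S by apply: sumr_ge0 => *; exact: q_ge0.
have h6 : g ^+ k.+1 * (k%:R * Q) <= K * (rho ^+ k * Q).
  apply: (@le_trans _ _ (g ^+ k * (k%:R * Q))).
    by apply: ler_wpM2r => //; apply: mulr_ge0 => //; exact: ler0n.
  rewrite ge (_ : r ^+ k * rho ^+ k * (k%:R * Q) = (k%:R * r ^+ k) * (rho ^+ k * Q)); last by ring.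
  apply: ler_wpM2r; first by apply: mulr_ge0 => //; exact: exprn_ge0 (ltW rho0).
  exact: hK.
have h7 : g ^+ k.+1 * S <= M * r ^+ k.
  apply: (@le_trans _ _ (g ^+ k * S)); first exact: ler_wpM2r.
  rewrite ge -mulrA mulrC; apply: ler_wpM2r; first by rewrite exprn_ge0 // ltW.
  exact: hM.
rewrite (_ : g ^+ k.+1 * (c0 * (k%:R * Q + S)) = c0 * (g ^+ k.+1 * (k%:R * Q)) + c0 * (g ^+ k.+1 * S)); last by ring.
rewrite -!mulrA.
apply: lerD; apply: ler_wpM2l => //; apply: ler_wpM2l; try exact: ler0n.
  by rewrite [X in _ <= X]mulrA; exact: h6.
exact: h7.
Qed.
End Conv.


Lemma cvg_cauchy_seq (R : realType) (u : nat -> R) :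
  cvgn u <-> forall k : nat, exists N, forall i j, `|u (N + i)%N - u (N + j)%N| < k.+1%:R^-1.
Proof.
split.
  move=> /cvg_ex [l /cvgrPdist_lt H] k.
  have e0 : 0 < k.+1%:R^-1 / 2 :> R by rewrite divr_gt0 // invr_gt0 ltr0n.
  have [N _ HN] := H _ e0.
  exists N => i j.
  have h1 := HN (N + i)%N (leq_addr _ _); have h2 := HN (N + j)%N (leq_addr _ _).
  rewrite /= in h1 h2.
  rewrite (_ : u (N+i)%N - u (N+j)%N = (l - u (N+j)%N) - (l - u (N+i)%N)); last by ring.
  apply: (le_lt_trans (ler_normB _ _)).
  by rewrite [X in _ < X](splitr (k.+1%:R^-1)) ltrD.
move=> H; apply/cauchy_cvgP/cauchy_exP => e e0.
have [k hk] : exists k : nat, k.+1%:R^-1 < e.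
  exists (Num.bound e^-1); rewrite -[X in _ < X]invrK ltf_pV2 ?posrE ?ltr0n ?invr_gt0 //.
  apply: (lt_trans (archi_boundP _)); first by rewrite invr_ge0 ltW.
  by rewrite ltr_nat.
have [N HN] := H k.
exists (u N); exists N => // m /= Nm.
rewrite -ball_normE /ball_ /=.
have := HN 0%N (m - N)%N; rewrite addn0 subnKC //.
by move/lt_trans; apply.
Qed.

Section LimMeas.
Context d (X : measurableType d) (R : realType).

Lemma measurable_ltc (f : X -> R) (c : R) : measurable_fun setT f ->
  measurable [set x | `|f x| < c].
Proof.
move=> mf.
have mg : measurable_fun setT (fun x => `|f x|).
  exact: (measurableT_comp (@normr_measurable R setT) mf).
have := mg measurableT `]-oo, c[%classic (measurable_itv _).
rewrite setTI; congr measurable; apply/seteqP; split => x /=;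
by rewrite in_itv /=.
Qed.

Lemma measurable_limn (s : nat -> X -> R) :
  (forall N, measurable_fun setT (s N)) ->
  measurable_fun setT (fun x => limn (s ^~ x)).
Proof.
move=> ms.
set C := [set x | cvgn (s ^~ x)].
have CE : C = \bigcap_k \bigcup_N \bigcap_i \bigcap_j
    [set x | `|s (N + i)%N x - s (N + j)%N x| < k.+1%:R^-1].
  apply/seteqP; split => x /=.
    by move/cvg_cauchy_seq => H k _; have [N HN] := H k; exists N => // i _ j _; exact: HN.
  move=> H; apply/cvg_cauchy_seq => k; have [N _ HN] := H k I.
  by exists N => i j; exact: HN i I j I.
have mC : measurable C.
  rewrite CE; apply: bigcapT_measurable => k; apply: bigcupT_measurable => N.
  apply: bigcapT_measurable => i; apply: bigcapT_measurable => j.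
  by apply: measurable_ltc; apply: measurable_funB.
have -> : setT = C `|` ~` C by rewrite setUv.
apply/measurable_funU => //; first exact: measurableC.
split.
  apply: (measurable_fun_cvg (h := s)) => [m|x Cx].
    exact: measurable_funS (ms m).
  exact: Cx.
apply: (eq_measurable_fun (cst point)); last exact: measurable_cst.
move=> x; rewrite inE /C /= => nC; apply/esym/getPN => l hl.
by apply: nC; apply/cvg_ex; exists l.
Qed.
End LimMeas.

Section SeqSpace.
Context d (V : measurableType d).
Definition seqsp := nat -> V.
HB.instance Definition _ := Pointed.on seqsp.
Definition seq_gen : set (set seqsp) :=
  [set A | exists i E, measurable E /\ A = (fun u : seqsp => u i) @^-1` E].
Definition seq_meas := <<s seq_gen >>.
Let s0 : seq_meas set0. Proof. exact: sigma_algebra0. Qed.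
Let sC A : seq_meas A -> seq_meas (~` A). Proof. exact: sigma_algebraC. Qed.
Let sU (F : _^nat) : (forall i, seq_meas (F i)) -> seq_meas (\bigcup_i (F i)).
Proof. exact: sigma_algebra_bigcup. Qed.
HB.instance Definition _ := @isMeasurable.Build default_measure_display seqsp seq_meas s0 sC sU.

Lemma proj_meas i : measurable_fun setT (fun u : seqsp => u i).
Proof. by move=> _ E mE; rewrite setTI; apply: sub_sigma_algebra; exists i, E. Qed.

Lemma meas_into_seq d' (T : measurableType d') (f : T -> seqsp) :
  (forall i, measurable_fun setT (fun t => f t i)) -> measurable_fun setT f.
Proof.
move=> hf; apply: (measurability seq_gen) => //.
move=> _ [B [i [E [mE ->]]] <-].
exact: hf.
Qed.

Definition cyl (s : seq nat) (E : nat -> set V) : set seqsp :=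
  [set u | forall i, i \in s -> E i (u i)].
Definition Cyl : set (set seqsp) :=
  [set A | exists s E, uniq s /\ (forall i, measurable (E i)) /\ A = cyl s E].

Lemma cyl_meas s E : (forall i, measurable (E i)) -> measurable (cyl s E).
Proof.
move=> mE; elim: s => [|a s IH].
  by rewrite (_ : cyl [::] E = setT) //; apply/seteqP; split => u //= _ i.
rewrite (_ : cyl (a :: s) E = ((fun u : seqsp => u a) @^-1` E a) `&` cyl s E).
  apply: measurableI => //; rewrite -[X in measurable X]setTI; exact: proj_meas.
apply/seteqP; split => u /=.
  move=> H; split; first by apply: H; rewrite mem_head.
  by move=> i his; apply: H; rewrite in_cons his orbT.
by move=> [h1 h2] i; rewrite in_cons => /orP [/eqP ->|]; [exact: h1 | exact: h2].
Qed.

Lemma Cyl_setI : setI_closed Cyl.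
Proof.
move=> _ _ [s1 [E1 [u1 [m1 ->]]]] [s2 [E2 [u2 [m2 ->]]]].
exists (undup (s1 ++ s2)), (fun i => (if i \in s1 then E1 i else setT) `&`
                                   (if i \in s2 then E2 i else setT)).
split; first exact: undup_uniq.
split.
  move=> i; apply: measurableI; [by case: ifP|by case: ifP].
apply/seteqP; split => u /=.
  move=> [h1 h2] i; rewrite mem_undup mem_cat => _.
  by split; case: ifP => // /[dup] H _; [exact: h1 | exact: h2].
move=> H; split => i hi.
  by have := H i; rewrite mem_undup mem_cat hi /= => /(_ isT) [].
by have := H i; rewrite mem_undup mem_cat hi orbT => /(_ isT) [_].
Qed.

Lemma Cyl_gen : measurable = <<s Cyl >>.
Proof.
apply/seteqP; split.
  apply: smallest_sub; first exact: smallest_sigma_algebra.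
  move=> _ [i [E [mE ->]]].
  apply: sub_sigma_algebra.
  exists [:: i], (fun j => if j == i then E else setT).
  split => //; split; first by move=> j; case: ifP.
  apply/seteqP; split => u /=.
    by move=> Eu j; rewrite inE => /eqP ->; rewrite eqxx.
  by move=> H; have := H i (mem_head _ _); rewrite eqxx.
apply: smallest_sub; first exact: smallest_sigma_algebra.
by move=> _ [s [E [_ [mE ->]]]]; exact: cyl_meas.
Qed.
End SeqSpace.
Section PFW.
Context d d' (T1 : measurableType d) (T2 : measurableType d') (R : realType).
Variables (m : {measure set T1 -> \bar R}) (f : T1 -> T2).
Variable mf : measurable_fun [set: T1] f.
Definition pfw of measurable_fun [set: T1] f := fun A => m (f @^-1` A).
Let pfw0 : pfw mf set0 = 0%E.
Proof. by rewrite /pfw preimage_set0 measure0. Qed.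
Let pfw_ge0 A : (0 <= pfw mf A)%E.
Proof. exact: measure_ge0. Qed.
Let pfw_sa : semi_sigma_additive (pfw mf).
Proof.
move=> F mF tF mUF; rewrite /pfw preimage_bigcup.
apply: measure_semi_sigma_additive.
- by move=> n; rewrite -[X in measurable X]setTI; exact: mf.
- apply/trivIsetP => /= i j _ _ ij; rewrite -preimage_setI.
  by move/trivIsetP : tF => /(_ _ _ _ _ ij) ->//; rewrite preimage_set0.
- by rewrite -preimage_bigcup -[X in measurable X]setTI; exact: mf.
Qed.
HB.instance Definition _ := isMeasure.Build _ _ _ (pfw mf) pfw0 pfw_ge0 pfw_sa.
End PFW.

Section Law.
Context d (V : measurableType d) d' (T : measurableType d') (R : realType)
  (Pr : probability T R) (D : probability V R) (Y : option nat -> T -> V).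
Hypotheses (mY : forall o, measurable_fun setT (Y o))
  (lawY : forall o, has_law Pr D (Y o)) (indY : mutually_independent Pr Y).

Lemma cyl_prob (f : nat -> option nat) (gi : option nat -> nat) (fK : cancel f gi) s E :
  uniq s -> (forall i, measurable (E i)) ->
  Pr [set t | forall i, i \in s -> E i (Y (f i) t)] = (\prod_(i <- s) D (E i))%E.
Proof.
move=> us mE.
have -> : [set t | forall i, i \in s -> E i (Y (f i) t)] =
    \bigcap_(o in [set` map f s]) (Y o @^-1` E (gi o)).
  apply/seteqP; split => t /=.
    by move=> H o /mapP [i his ->]; rewrite fK; exact: H.
  by move=> H i his; have := H (f i) (map_f f his); rewrite /= fK.
rewrite indY; last 2 first.
- by rewrite (map_inj_uniq (can_inj fK)).
- by move=> o; exact: mE.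
by rewrite big_map; apply: eq_bigr => i _; rewrite fK lawY.
Qed.

Definition Zf (f : nat -> option nat) (t : T) : seqsp V := fun i => Y (f i) t.
Lemma mZf f : measurable_fun setT (Zf f).
Proof. by apply: meas_into_seq => i; exact: mY. Qed.

Lemma law_eq (f1 f2 : nat -> option nat) (g1 g2 : option nat -> nat)
  (c1 : cancel f1 g1) (c2 : cancel f2 g2) A :
  measurable A -> Pr (Zf f1 @^-1` A) = Pr (Zf f2 @^-1` A).
Proof.
move=> mA.
rewrite -[LHS]/(pfw Pr (mZf f1) A) -[RHS]/(pfw Pr (mZf f2) A).
apply: (@measure_unique _ _ (seqsp V) (@Cyl _ V) (fun _ => setT) (@Cyl_gen _ V) (@Cyl_setI _ V) _ _
   (pfw Pr (mZf f1)) (pfw Pr (mZf f2)) _ _ A mA).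
- move=> _; exists [::], (fun _ => setT); split => //; split => //.
  by apply/seteqP; split => u //= _ i.
- by apply/seteqP; split => u // _; exists 0%N.
- move=> _ [s [E [us [mE ->]]]].
  rewrite /pfw.
  by rewrite [LHS](cyl_prob c1 us mE) [RHS](cyl_prob c2 us mE).
- move=> _; rewrite /pfw; apply: (le_lt_trans (probability_le1 _ _)) => //.
  rewrite -[X in measurable X]setTI; first exact: (mZf f1).
exact: ltey.
Qed.
End Law.


Section MeasG.
Context dX (X : measurableType dX) (R : realType) (n : nat).

Lemma msumf (I : Type) (s : seq I) (h : I -> X -> R) :
  (forall i, measurable_fun setT (h i)) ->
  measurable_fun setT (fun x => \sum_(i <- s) h i x).
Proof.
move=> mh; elim: s => [|a s IH].
  apply: (eq_measurable_fun (cst (0:R))); last exact: measurable_cst.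
  by move=> x _; rewrite big_nil.
apply: (eq_measurable_fun (h a \+ (fun x => \sum_(i <- s) h i x))).
  by move=> x _; rewrite big_cons.
exact: measurable_funD.
Qed.

Definition mvec (f : X -> 'cV[R]_n) := forall i, measurable_fun setT (fun x => f x i 0).

Lemma mvec_cst z : mvec (fun _ => z).
Proof. by move=> i; exact: measurable_cst. Qed.

Lemma mvec_mul (M : 'M[R]_n) f : mvec f -> mvec (fun x => M *m f x).
Proof.
move=> mf i.
apply: (eq_measurable_fun (fun x => \sum_j M i j * f x j 0)).
  by move=> x _; rewrite mxE.
apply: msumf => j; apply: measurable_funM; [exact: measurable_cst | exact: mf].
Qed.

Lemma mvec_add f g : mvec f -> mvec g -> mvec (fun x => f x + g x).
Proof.
move=> mf mg i; apply: (eq_measurable_fun (fun x => f x i 0 + g x i 0)).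
  by move=> x _; rewrite mxE.
exact: measurable_funD.
Qed.

Lemma mvec_sum (I : Type) (s : seq I) (f : I -> X -> 'cV[R]_n) :
  (forall t, mvec (f t)) -> mvec (fun x => \sum_(t <- s) f t x).
Proof.
move=> mf i; apply: (eq_measurable_fun (fun x => \sum_(t <- s) f t x i 0)).
  by move=> x _; rewrite summxE.
by apply: msumf => t; exact: mf.
Qed.

Lemma meas_bil (M : 'M[R]_n) f g : mvec f -> mvec g ->
  measurable_fun setT (fun x => bil (f x) M (g x)).
Proof.
move=> mf mg.
apply: (eq_measurable_fun (fun x => \sum_j \sum_i f x i 0 * M i j * g x j 0)).
  by move=> x _; rewrite bil_expand.
apply: msumf => j; apply: msumf => i.
apply: measurable_funM; last exact: mg.
apply: measurable_funM; [exact: mf | exact: measurable_cst].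
Qed.

Lemma meas_rsum (F : nat -> X -> R) : (forall k, measurable_fun setT (F k)) ->
  measurable_fun setT (fun x => rsum (fun k => F k x)).
Proof.
move=> mF; rewrite /rsum.
apply: (measurable_limn (s := fun N x => series (fun k => F k x) N)) => N.
by rewrite /series /=; apply: msumf.
Qed.

Lemma meas_Gfun (g : R) (P A : 'M[R]_n) (v : X -> nat -> 'cV[R]_n) (z : X -> 'cV[R]_n) :
  (forall k, mvec (fun x => v x k)) -> mvec z ->
  measurable_fun setT (fun x => Gfun g P A (v x) (z x)).
Proof.
move=> mv mz; rewrite /Gfun.
apply: measurable_funD; last first.
  apply: measurable_funM; first exact: measurable_cst.
  apply: meas_rsum => k; case: (k == 0%N); first exact: measurable_cst.
  apply: measurable_funM; first exact: measurable_cst.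
  apply: meas_bil => //; apply: mvec_sum => t; apply: mvec_mul; exact: mv.
apply: measurable_funD; last first.
  apply: meas_rsum => k; apply: measurable_funM; first exact: measurable_cst.
  exact: meas_bil.
apply: measurable_funD; first exact: meas_bil.
apply: measurable_funM; first exact: measurable_cst.
apply: meas_rsum => k; apply: measurable_funM; first exact: measurable_cst.
by apply: meas_bil => //; apply: mvec_mul.
Qed.
End MeasG.

Lemma mvec_col (R : realType) (n : nat) k :
  mvec (fun u : seqsp (n.-tuple R) => col_of (u k)).
Proof.
move=> i; apply: (eq_measurable_fun (fun u : seqsp (n.-tuple R) => tnth (u k) i)).
  by move=> u _; rewrite /col_of mxE.
exact: (measurableT_comp (measurable_tnth i) (proj_meas k)).
Qed.


Section AS.
Context (R : realType) (n : nat) d (T : measurableType d) (Pr : probability T R)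
  (D : probability (n.-tuple R) R) (w : nat -> T -> n.-tuple R) (rho : R).
Hypotheses (rho0 : 0 < rho) (rho1 : rho < 1)
  (mw : forall k, measurable_fun setT (w k)) (lw : forall k, has_law Pr D (w k))
  (hmom : forall i, D.-integrable setT (fun y : n.-tuple R => (`|tnth y i| ^+ 2)%:E)).

Definition qt (y : n.-tuple R) : R := q (col_of y).
Lemma qtE y : qt y = \sum_i (tnth y i) ^+ 2.
Proof. by rewrite /qt /q; apply: eq_bigr => i _; rewrite mxE. Qed.
Lemma qt_ge0 y : 0 <= qt y. Proof. exact: q_ge0. Qed.

Lemma mqt : measurable_fun setT qt.
Proof.
apply: (eq_measurable_fun (fun y : n.-tuple R => \sum_i (tnth y i) ^+ 2)).
  by move=> y _; rewrite qtE.
apply: msumf => i; rewrite (_ : (fun y : n.-tuple R => tnth y i ^+ 2) = (fun y => tnth y i) \* (fun y => tnth y i)).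
  by apply: measurable_funM; exact: measurable_tnth.
by apply: funext => y /=; rewrite expr2.
Qed.

Lemma mqtE : measurable_fun setT (fun y => (qt y)%:E).
Proof. exact: ((measurable_EFinP setT qt).2 mqt). Qed.

Local Open Scope ereal_scope.

Lemma int_qt : \int[D]_(y in setT) (qt y)%:E < +oo.
Proof.
rewrite (_ : (fun y => (qt y)%:E) = (fun y => \sum_(i < n) ((`|tnth y i| ^+ 2)%:E))); last first.
  apply: funext => y; rewrite qtE sumEFin; congr (_%:E); apply: eq_bigr => i _.
  by rewrite real_normK // num_real.
have mf : forall i : 'I_n, measurable_fun setT (fun y : n.-tuple R => (`|tnth y i| ^+ 2)%:E).
  move=> i; have /integrableP [H _] := hmom i; exact: H.
have f0 : forall (i : 'I_n) (y : n.-tuple R), setT y -> 0 <= (`|tnth y i| ^+ 2)%:E.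
  by move=> i y _; rewrite lee_fin exprn_ge0.
rewrite (ge0_integral_sum D measurableT mf f0).
apply: lte_sum_pinfty => i _.
have /integrableP [_ H] := hmom i.
apply: le_lt_trans H; rewrite le_eqVlt; apply/orP; left; apply/eqP.
by apply: eq_integral => y _; rewrite gee0_abs // lee_fin exprn_ge0.
Qed.

Lemma int_qtw k : \int[Pr]_(t in setT) (qt (w k t))%:E = \int[D]_(y in setT) (qt y)%:E.
Proof.
have H := ge0_integral_pushforward (mw k) Pr measurableT mqtE (fun y _ => qt_ge0 y).
rewrite preimage_setT in H.
rewrite [LHS](_ : _ = \int[Pr]_(x in setT) ((fun y => (qt y)%:E) \o w k) x) //.
rewrite -H; apply: eq_measure_integral => A mA _ /=.
by rewrite /pushforward lw.
Qed.

Definition hsum t := \sum_(k <oo) ((rho ^+ k * qt (w k t))%:E).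

Let c := \int[D]_(y in setT) (qt y)%:E.
Let c0 : 0 <= c. Proof. by apply: integral_ge0 => y _; rewrite lee_fin qt_ge0. Qed.
Let cfin : c \is a fin_num. Proof. by rewrite ge0_fin_numE // int_qt. Qed.

Lemma mterm k : measurable_fun setT (fun t => (rho ^+ k * qt (w k t))%:E).
Proof.
have H : measurable_fun setT (fun t => (rho ^+ k * qt (w k t))%R).
  apply: measurable_funM; first exact: measurable_cst.
  exact: measurableT_comp mqt (mw k).
exact: ((measurable_EFinP setT _).2 H).
Qed.

Lemma mhsum : measurable_fun setT hsum.
Proof.
apply: (ge0_emeasurable_sum (P := predT)) => [k t _ _|k _].
  by rewrite lee_fin mulr_ge0 // ?qt_ge0 // exprn_ge0 // ltW.
exact: mterm.
Qed.

Lemma hsum_int : Pr.-integrable setT hsum.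
Proof.
apply/integrableP; split; first exact: mhsum.
have h0 : forall t, 0 <= hsum t.
  by move=> t; apply: nneseries_ge0 => k _ _; rewrite lee_fin mulr_ge0 // ?qt_ge0 // exprn_ge0 // ltW.
rewrite (eq_integral hsum); last by move=> t _; rewrite gee0_abs.
rewrite /hsum integral_nneseries //; last first.
  by move=> k t _; rewrite lee_fin mulr_ge0 // ?qt_ge0 // exprn_ge0 // ltW.
  by move=> k; exact: mterm.
rewrite (@eq_eseriesr _ _ (fun k => ((fine c) * rho ^+ k)%:E)); last first.
  move=> k _.
  rewrite (eq_integral (fun x => (rho ^+ k)%:E * (qt (w k x))%:E)) //.
  rewrite ge0_integralZl_EFin //; last by rewrite exprn_ge0 // ltW.
  - by rewrite int_qtw -/c -(fineK cfin) -EFinM mulrC.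
  - by move=> t _; rewrite lee_fin qt_ge0.
  - exact: measurableT_comp mqtE (mw k).
apply: (@le_lt_trans _ _ ((fine c / (1 - rho))%:E)); last exact: ltey.
apply: lime_le; first by apply: is_cvg_nneseries => k _ _; rewrite lee_fin mulr_ge0 // ?fine_ge0 // exprn_ge0 // ltW.
apply: nearW => N; rewrite sumEFin lee_fin.
have := @geometric_le_lim R N (fine c) rho (fine_ge0 c0) rho0.
rewrite gtr0_norm // => /(_ rho1).
by rewrite /series /=; under eq_bigr do rewrite mulrC.
Qed.

Lemma as_good : exists N, measurable N /\ Pr N = 0 /\
  forall t, ~ N t -> good rho (fun k => col_of (w k t)).
Proof.
have [N [mN PN sub]] := integrable_ae measurableT hsum_int.
exists N; split => //; split => // t Nt.
have ht : hsum t \is a fin_num.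
  case: (boolP (hsum t \is a fin_num)) => // hn; exfalso; apply: Nt; apply: sub => /= H.
  by move: hn; rewrite (H I).
rewrite /good; apply: nnseries_is_cvg.
  by move=> k; rewrite mulr_ge0 // ?qt_ge0 // exprn_ge0 // ltW.
by move: ht; rewrite fin_numElt => /andP [].
Qed.
End AS.


Lemma meas_eq_null d (T : measurableType d) (R : realType) (Pr : probability T R)
  (S1 S2 N : set T) : measurable S1 -> measurable S2 -> measurable N -> Pr N = 0%E ->
  (forall t, ~ N t -> (S1 t <-> S2 t)) -> Pr S1 = Pr S2.
Proof.
move=> m1 m2 mN PN H.
have key : forall A B : set T, measurable A -> measurable B ->
    (forall t, ~ N t -> A t -> B t) -> (Pr A <= Pr B)%E.
  move=> A B mA mB AB.
  have mAN : measurable (A `&` ~` N) by apply: measurableI => //; exact: measurableC.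
  apply: (@le_trans _ _ (Pr ((A `&` ~` N) `|` N))).
    apply: le_measure; rewrite ?inE //; first exact: measurableU.
    by move=> t At; have [Nt|Nt] := pselect (N t); [right|left].
  rewrite measureU0 //; apply: le_measure; rewrite ?inE //.
  by move=> t [At Nt]; exact: AB.
apply/le_anti/andP; split; apply: key => // t Nt; by have := H t Nt => -[].
Qed.

Theorem theorem1 (R : realType) (n p : nat)
  (A : 'M[R]_n) (B : 'M[R]_(n, p)) (Q : 'M[R]_n) (Rc : 'M[R]_p)
  (gamma : R) (K : 'M[R]_(p, n)) (P : 'M[R]_n)
  (d : measure_display) (T : measurableType d) (Pr : probability T R)
  (D : probability (n.-tuple R) R)
  (w : nat -> T -> n.-tuple R) (v0 : T -> n.-tuple R) (x : 'cV[R]_n) :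
  posdef Q -> posdef Rc ->
  0 < gamma < 1 ->
  stable (A + B *m K) ->
  P = Q + K^T *m Rc *m K + gamma *: ((A + B *m K)^T *m P *m (A + B *m K)) ->
  (* D has bounded (finite) moments of every order *)
  (forall (m : nat) (i : 'I_n),
      D.-integrable setT (fun y : n.-tuple R => (`|tnth y i| ^+ m)%:E)) ->
  (* w_0, w_1, ... and v_0 are random vectors with law D, mutually independent *)
  (forall k, measurable_fun setT (w k)) -> measurable_fun setT v0 ->
  (forall k, has_law Pr D (w k)) -> has_law Pr D v0 ->
  mutually_independent Pr
    (fun o : option nat => match o with Some k => w k | None => v0 end) ->
  eq_in_law Pr
    (fun t => Gfun gamma P (A + B *m K) (fun k => col_of (w k t)) x)
    (fun t => bil x (Q + K^T *m Rc *m K) x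
       + gamma * Gfun gamma P (A + B *m K) (fun k => col_of (w k t))
                   ((A + B *m K) *m x + col_of (v0 t))).
Proof.
move=> [hQs _] [hRs _] hg hst hP hmom mw mv0 lw lv0 ind.
set AK := A + B *m K in hst hP *.
set QK := Q + K^T *m Rc *m K in hP *.
have hQK : QK^T = QK by rewrite /QK linearD /= hQs !trmx_mul trmxK hRs mulmxA.
have Psym : P^T = P := P_sym hst hg hQK hP.
have [m [m0 hm]] := stable_boundP P hst.
case/andP: hg => g0 gl1.
set rho := (1 + gamma) / 2.
have grho : gamma < rho by rewrite /rho; lra.
have rho1 : rho < 1 by rewrite /rho; lra.
have rho0 : 0 < rho by rewrite /rho; lra.
set Y := fun o : option nat => match o with Some k => w k | None => v0 end.
have mY : forall o, measurable_fun setT (Y o) by case.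
have lY : forall o, has_law Pr D (Y o) by case.
pose f1 := fun i : nat => Some i.
pose g1 := fun o : option nat => if o is Some k then k else 0%N.
have c1 : cancel f1 g1 by [].
pose f2 := fun i : nat => if i is k.+1 then Some k else None.
pose g2 := fun o : option nat => if o is Some k then k.+1 else 0%N.
have c2 : cancel f2 g2 by case.
pose F := fun u : seqsp (n.-tuple R) => Gfun gamma P AK (fun k => col_of (u k)) x.
pose F' := fun u : seqsp (n.-tuple R) => bil x QK x + gamma *
   Gfun gamma P AK (fun k => col_of (u k.+1)) (AK *m x + col_of (u 0%N)).
have mF : measurable_fun setT F.
  by apply: meas_Gfun => [k|]; [exact: mvec_col | exact: mvec_cst].
have mF' : measurable_fun setT F'.
  apply: measurable_funD; first exact: measurable_cst.
  apply: measurable_funM; first exact: measurable_cst.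
  apply: meas_Gfun => [k|]; first exact: mvec_col.
  by apply: mvec_add; [exact: mvec_cst | exact: mvec_col].
have [N [mN [PN goodN]]] := as_good rho0 rho1 mw lw (hmom 2%N).
move=> E mE.
have mFE : measurable (F @^-1` E) by rewrite -[X in measurable X]setTI; exact: mF.
have mF'E : measurable (F' @^-1` E) by rewrite -[X in measurable X]setTI; exact: mF'.
have mZ2 := mZf mY f2.
transitivity (Pr (Zf Y f1 @^-1` (F @^-1` E))); first by [].
rewrite (law_eq mY lY ind c1 c2 mFE).
transitivity (Pr (Zf Y f2 @^-1` (F' @^-1` E))); last by [].
apply: (meas_eq_null _ _ mN PN).
- by rewrite -[X in measurable X]setTI; exact: mZ2.
- by rewrite -[X in measurable X]setTI; exact: mZ2.
move=> t Nt.
have gt := goodN t Nt.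
change (E (F (Zf Y f2 t)) <-> E (F' (Zf Y f2 t))).
suff -> : F (Zf Y f2 t) = F' (Zf Y f2 t) by [].
rewrite /F /F'.
apply: (G_shift (u := fun k => col_of (Zf Y f2 t k))) => //.
- exact: (cvg_T1 g0 grho rho1 m0 hm).
- exact: (cvg_T1 g0 grho rho1 m0 hm).
- exact: (cvg_T2 g0 grho rho1 m0 hm).
- exact: (cvg_T3 g0 grho rho1 m0 hm).
Qed.
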